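(* Let $E$ be an effect algebra and $(B,v)$ a unital Abelian po-group. Then there is an isomorphism of generalized effect algebras $$[E,\Gamma(B,v)]\cong[\mathrm{Gr}(E),(B,v)]_{\mathrm{GEA}},$$ natural in both $E$ and $(B,v)$, given (from right to left) by $g\mapsto g\circ\eta_E$.
   Context: An effect algebra is a partial algebra $(E;\oplus,',0,1)$ with $\oplus$ commutative and associative (Kleene identities), $a\oplus b=1$ iff $b=a'$, and $a\oplus1$ defined iff $a=0$. For an Abelian po-group $B$ and $v\in B^+$, $\Gamma(B,v)$ is the interval $\{b:0\le b\le v\}$ as an effect algebra ($a\oplus b=a+b$ defined iff $a+b\le v$, $a'=v-a$). The universal group of $E$ is a unital Abelian po-group $(\mathrm{Gr}(E),u)$ together with an effect algebra homomorphism $\eta_E\colon E\to\Gamma(\mathrm{Gr}(E),u)$ such that every effect algebra homomorphism $E\to\Gamma(B,w)$ factors as $\Gamma(g)\circ\eta_E$ for a unique order-preserving group homomorphism $g\colon\mathrm{Gr}(E)\to B$ with $g(u)=w$ (this holds for any $w\in B^+$). $[E,F]$ denotes the generalized effect algebra of maps $E\to F$ preserving $0$ and existing orthosums, with pointwise partial sum. For unital po-groups $(A,u)$, $(B,v)$, $[A,B]_{\mathrm{GEA}}$ is the set of order-preserving group homomorphisms $g\colon A\to B$ with $g(u)\le v$, made into a generalized effect algebra by $g\perp h$ iff $g(u)+h(u)\le v$, with pointwise sum and the zero map as $0$. *)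

(* Defs.v *)
From mathcomp Require Import all_boot all_algebra.
Set Implicit Arguments. Unset Strict Implicit. Unset Printing Implicit Defensive.
Import GRing.Theory.
Local Open Scope ring_scope.

Definition obind_sum {T : Type} (s : T -> T -> option T) (x : option T) (c : T)
  : option T := match x with Some y => s y c | None => None end.
Definition sum_obind {T : Type} (s : T -> T -> option T) (a : T) (x : option T)
  : option T := match x with Some y => s a y | None => None end.

Record effect_algebra := EffectAlgebra {
  ea_car :> Type;
  ea_sum : ea_car -> ea_car -> option ea_car;
  ea_comp : ea_car -> ea_car;
  ea_zero : ea_car;
  ea_one : ea_car;
  ea_sumC : forall a b, ea_sum a b = ea_sum b a;
  ea_sumA : forall a b c,
      obind_sum ea_sum (ea_sum a b) c = sum_obind ea_sum a (ea_sum b c);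
  ea_sum_one : forall a b, ea_sum a b = Some ea_one <-> b = ea_comp a;
  ea_sum_one_def : forall a, (exists c, ea_sum a ea_one = Some c) <-> a = ea_zero
}.

Definition ea_hom (E F : effect_algebra) (f : E -> F) : Prop :=
  f (ea_one E) = ea_one F /\
  forall a b c, ea_sum a b = Some c -> ea_sum (f a) (f b) = Some (f c).

Record pogroup := POGroup {
  pg_sort :> zmodType;
  pg_le : pg_sort -> pg_sort -> Prop;
  pg_le_refl : forall x, pg_le x x;
  pg_le_anti : forall x y, pg_le x y -> pg_le y x -> x = y;
  pg_le_trans : forall x y z, pg_le x y -> pg_le y z -> pg_le x z;
  pg_le_add : forall x y z, pg_le x y -> pg_le (x + z) (y + z)
}.

Definition unital (B : pogroup) (v : B) : Prop :=
  pg_le 0 v /\ forall x : B, exists n : nat, pg_le (- (v *+ n)) x /\ pg_le x (v *+ n).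

Definition po_hom (A B : pogroup) (g : A -> B) : Prop :=
  (forall x y, g (x + y) = g x + g y) /\ (forall x y, pg_le x y -> pg_le (g x) (g y)).

(* Gamma(B,v) = {b | 0 <= b <= v}, with a (+) b = a + b defined iff a + b <= v.
   A map E -> Gamma(B,v) is represented by a map E -> B with values in [0,v]. *)
Definition in_gamma (B : pogroup) (v : B) (b : B) : Prop := pg_le 0 b /\ pg_le b v.

Definition gamma_additive (E : effect_algebra) (B : pogroup) (v : B) (f : E -> B) :=
  forall a b c, ea_sum a b = Some c -> pg_le (f a + f b) v /\ f c = f a + f b.

Definition ea_hom_gamma (E : effect_algebra) (B : pogroup) (v : B) (f : E -> B) :=
  (forall a, in_gamma v (f a)) /\ f (ea_one E) = v /\ gamma_additive v f.

(* element of the GEA [E, Gamma(B,v)]: preserves 0 and existing orthosums *)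
Definition ea_map_gamma (E : effect_algebra) (B : pogroup) (v : B) (f : E -> B) :=
  (forall a, in_gamma v (f a)) /\ f (ea_zero E) = 0 /\ gamma_additive v f.

Definition ea_map_orth (E : effect_algebra) (B : pogroup) (v : B) (f h : E -> B) :=
  forall a, pg_le (f a + h a) v.

Definition universal_group (E : effect_algebra) (G : pogroup) (u : G) (eta : E -> G)
  : Prop :=
  unital u /\ ea_hom_gamma u eta /\
  forall (B : pogroup) (w : B), pg_le 0 w ->
  forall f : E -> B, ea_hom_gamma w f ->
  exists g : G -> B,
    (po_hom g /\ g u = w /\ forall a, g (eta a) = f a) /\
    (forall g' : G -> B, po_hom g' -> g' u = w -> (forall a, g' (eta a) = f a) ->
       forall x, g' x = g x).

Definition gea_hom (A : pogroup) (u : A) (B : pogroup) (v : B) (g : A -> B) : Prop :=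
  po_hom g /\ pg_le (g u) v.

Definition gea_orth (A : pogroup) (u : A) (B : pogroup) (v : B) (g h : A -> B) : Prop :=
  pg_le (g u + h u) v.

Definition map_add (X : Type) (B : zmodType) (g h : X -> B) : X -> B :=
  fun x => g x + h x.
Definition map_zero (X : Type) (B : zmodType) : X -> B := fun _ => 0.

Definition Phi (E : effect_algebra) (G B : pogroup) (eta : E -> G) (g : G -> B)
  : E -> B := fun a => g (eta a).

(* Main.v *)
Require Import Defs.
From mathcomp Require Import all_boot all_algebra.
Import GRing.Theory.
Local Open Scope ring_scope.


Lemma le_addD (B : pogroup) (x x' y y' : B) :
  pg_le x x' -> pg_le y y' -> pg_le (x + y) (x' + y').
Proof.
move=> H1 H2; apply: (pg_le_trans (pg_le_add y H1)).
rewrite [x' + y]addrC [x' + y']addrC; exact: pg_le_add.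
Qed.

Lemma hom0 (A B : pogroup) (g : A -> B) : po_hom g -> g 0 = 0.
Proof.
case=> H _; apply: (addrI (g 0)); rewrite addr0 -H addr0 //.
Qed.

Lemma eta0 (E : effect_algebra) (G : pogroup) (u : G) (eta : E -> G) :
  ea_hom_gamma u eta -> eta (ea_zero E) = 0.
Proof.
case=> Hg [H1 Ha].
have [_ H] := ea_sum_one_def (ea_zero E).
have [c Hc] := H erefl.
have [_ Ec] := Ha _ _ _ Hc.
have [Z0 _] := Hg (ea_zero E).
have [_ Cu] := Hg c.
rewrite Ec H1 in Cu.
have := pg_le_add (- u) Cu; rewrite -addrA subrr addr0 => Hle.
exact: pg_le_anti.
Qed.

Lemma le_one (E : effect_algebra) (B : pogroup) (v : B) (f : E -> B) :
  (forall a, in_gamma v (f a)) -> gamma_additive v f ->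
  forall a, pg_le (f a) (f (ea_one E)).
Proof.
move=> Hg Ha a.
have H : ea_sum a (ea_comp a) = Some (ea_one E) by apply/ea_sum_one.
have [_ ->] := Ha _ _ _ H.
have [Z _] := Hg (ea_comp a).
have := pg_le_add (f a) Z; rewrite add0r addrC //.
Qed.

Arguments le_addD {B x x' y y'}.
Arguments hom0 {A B g}.
Arguments eta0 {E G u eta}.
Arguments le_one {E B v f}.

Theorem lemma4p9 (E : effect_algebra) (G : pogroup) (u : G) (eta : E -> G)
    (Heta : universal_group u eta)
    (B : pogroup) (v : B) (Hv : unital v) :
  (* Phi maps [Gr(E),(B,v)]_GEA into [E,Gamma(B,v)] *)
  (forall g, gea_hom u v g -> ea_map_gamma v (Phi eta g)) /\
  (* Phi is injective *)
  (forall g h, gea_hom u v g -> gea_hom u v h ->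
     (forall a, Phi eta g a = Phi eta h a) -> forall x, g x = h x) /\
  (* Phi is surjective *)
  (forall f, ea_map_gamma v f ->
     exists g, gea_hom u v g /\ forall a, Phi eta g a = f a) /\
  (* Phi preserves and reflects orthogonality *)
  (forall g h, gea_hom u v g -> gea_hom u v h ->
     (gea_orth u v g h <-> ea_map_orth v (Phi eta g) (Phi eta h))) /\
  (* Phi preserves orthosums and zero *)
  (forall g h, gea_hom u v g -> gea_hom u v h -> gea_orth u v g h ->
     gea_hom u v (map_add g h) /\
     forall a, Phi eta (map_add g h) a = map_add (Phi eta g) (Phi eta h) a) /\
  (gea_hom u v (@map_zero G B) /\ forall a, Phi eta (@map_zero G B) a = @map_zero E B a) /\
  (* naturality in E : for an effect algebra morphism f : E -> F and the induced
     Gr(f) : Gr(E) -> Gr(F), Phi_E (g \o Gr(f)) = Phi_F g \o f *)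
  (forall (F : effect_algebra) (H : pogroup) (uF : H) (etaF : F -> H),
     universal_group uF etaF ->
     forall f : E -> F, ea_hom f ->
     forall Grf : G -> H, po_hom Grf -> Grf u = uF ->
       (forall a, Grf (eta a) = etaF (f a)) ->
     forall g, gea_hom uF v g ->
       gea_hom u v (fun x => g (Grf x)) /\
       forall a, Phi eta (fun x => g (Grf x)) a = Phi etaF g (f a)) /\
  (* naturality in (B,v) : for a unital po-group morphism k : (B,v) -> (B',v'),
     Phi (k \o g) = Gamma(k) \o Phi g *)
  (forall (B' : pogroup) (v' : B') (k : B -> B'), unital v' ->
     po_hom k -> k v = v' ->
     forall g, gea_hom u v g ->
       gea_hom u v' (fun x => k (g x)) /\
       forall a, Phi eta (fun x => k (g x)) a = k (Phi eta g a)).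
Proof.
have [Hu [Heg Hup]] := Heta.
have E0 := eta0 Heg.
have [Hetag [E1 Hetaa]] := Heg.
have Phi_hom : forall g : G -> B, po_hom g -> ea_hom_gamma (g u) (Phi eta g).
  move=> g [gA gM]; split; [|split].
  - move=> a; have [P Q] := Hetag a; split; last exact: gM.
    rewrite -(hom0 (conj gA gM)); exact: gM.
  - by rewrite /Phi E1.
  - move=> a b c Hs; have [P Q] := Hetaa _ _ _ Hs; rewrite /Phi Q gA; split=> //.
    rewrite -gA; exact: gM.
split.
  move=> g [gh gv]; have [P [_ Q]] := Phi_hom g gh; split; [|split].
  - move=> a; have [P1 P2] := P a; split=> //; exact: pg_le_trans P2 gv.
  - by rewrite /Phi E0 (hom0 gh).
  - move=> a b c Hs; have [Q1 Q2] := Q _ _ _ Hs; split=> //; exact: pg_le_trans Q1 gv.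
split.
  move=> g h [gh _] [hh _] Hgh x.
  have Hp := Phi_hom g gh.
  have Z : pg_le 0 (g u) by have [P _] := Hp; have [Z _] := P (ea_one E); move: Z; rewrite /Phi E1.
  have [k [_ Uk]] := Hup B (g u) Z _ Hp.
  rewrite (Uk g gh erefl (fun _ => erefl)) (Uk h hh) //.
  by rewrite -E1; have := Hgh (ea_one E).
split.
  move=> f [Hg [H0 Ha]].
  have Hf : ea_hom_gamma (f (ea_one E)) f.
    split; [|split=> //].
    - move=> a; have [P _] := Hg a; split=> //; exact: le_one.
    - move=> a b c Hs; have [_ Q] := Ha _ _ _ Hs; split=> //; rewrite -Q; exact: le_one.
  have [Z _] := Hg (ea_one E).
  have [k [[kh [ku ke]] _]] := Hup B _ Z f Hf.
  exists k; split=> //; split=> //; rewrite ku; by have [_ P] := Hg (ea_one E).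
split.
  move=> g h [[gA gM] _] [[hA hM] _]; split.
  - move=> Ho a; apply: pg_le_trans Ho; have [_ P] := Hetag a; apply: le_addD; [exact: gM|exact: hM].
  - by move=> Ho; have := Ho (ea_one E); rewrite /Phi E1.
split.
  move=> g h [[gA gM] _] [[hA hM] _] Ho; split=> //; split=> //; split.
  - by move=> x y; rewrite /map_add gA hA addrACA.
  - move=> x y Hxy; apply: le_addD; [exact: gM|exact: hM].
split.
  split=> //; split; [split|].
  - by move=> x y; rewrite /map_zero addr0.
  - move=> *; exact: pg_le_refl.
  - by case: Hv.
split.
  move=> F H uF etaF _ f _ Grf [fA fM] fu fe g [[gA gM] gv]; split.
  - split; last by rewrite fu.
    split; first by move=> x y; rewrite fA gA.
    by move=> x y Hxy; apply: gM; apply: fM.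
  - by move=> a; rewrite /Phi fe.
move=> B' v' k _ [kA kM] kv g [[gA gM] gv]; split=> //.
split; last by rewrite -kv; exact: kM.
split; first by move=> x y; rewrite gA kA.
by move=> x y Hxy; apply: kM; apply: gM.
Qed.
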